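(* Let $\mathbf{T}$ be the dappled triangular grid. For any vertex $v$ of $\mathbf{T}$, if $u_1$ and $u_2$ are distinct neighbors of $v$, then $(\psi_{\mathbf{T}}(u_1),\varphi_{\mathbf{T}}(u_1))\neq(\psi_{\mathbf{T}}(u_2),\varphi_{\mathbf{T}}(u_2))$. Consequently, for any connected dappled graph $G$ and any vertex $x\in V(G)$, if $f_1,f_2:V(G)\to V(\mathbf{T})$ are homomorphisms of dappled graphs with $f_1(x)=f_2(x)$, then $f_1=f_2$.
   Context: A hued graph is a graph $G$ together with a proper coloring $\psi_G:V(G)\to\mathbb{Z}_3$ (the hue). A dappled graph is a hued graph $G$ together with a proper coloring $\varphi_G:V(G)\to\mathbb{Z}_2^2$ (the color). A homomorphism of dappled graphs $f:V(G)\to V(H)$ maps edges to edges and satisfies $\psi_H(f(v))=\psi_G(v)$ and $\varphi_H(f(v))=\varphi_G(v)$ for all $v$. The dappled triangular grid $\mathbf{T}$ has vertex set $\mathbb{Z}^2$, with $(i_1,j_1)$ and $(i_2,j_2)$ adjacent iff $(i_2-i_1,j_2-j_1)\in\{\pm(1,0),\pm(0,1),\pm(1,1)\}$, hue $\psi_{\mathbf{T}}(i,j)=(i+j)\bmod 3$ and color $\varphi_{\mathbf{T}}(i,j)=(i\bmod 2, j\bmod 2)$. *)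

(* Defs.v *)
From Stdlib Require Import Relations.
From mathcomp Require Import all_boot all_order all_algebra.
Set Implicit Arguments. Unset Strict Implicit. Unset Printing Implicit Defensive.
Import GRing.Theory Num.Theory.
Local Open Scope ring_scope.

Definition Tvert := (int * int)%type.

Definition T_adj (u v : Tvert) : Prop :=
  let di := v.1 - u.1 in let dj := v.2 - u.2 in
     (di = 1 /\ dj = 0) \/ (di = -1 /\ dj = 0)
  \/ (di = 0 /\ dj = 1) \/ (di = 0 /\ dj = -1)
  \/ (di = 1 /\ dj = 1) \/ (di = -1 /\ dj = -1).

Definition T_hue (u : Tvert) : 'Z_3 := (u.1 + u.2)%:~R.

Definition T_color (u : Tvert) : 'Z_2 * 'Z_2 := (u.1%:~R, u.2%:~R).

Definition simple_graph (V : Type) (adj : V -> V -> Prop) : Prop :=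
  (forall u v, adj u v -> adj v u) /\ (forall v, ~ adj v v).

Definition proper_coloring (V C : Type) (adj : V -> V -> Prop) (c : V -> C) : Prop :=
  forall u v, adj u v -> c u <> c v.

Definition connected (V : Type) (adj : V -> V -> Prop) : Prop :=
  forall x y, clos_refl_trans V adj x y.

Definition dappled_hom_to_T (V : Type) (adj : V -> V -> Prop)
    (psi : V -> 'Z_3) (phi : V -> 'Z_2 * 'Z_2) (f : V -> Tvert) : Prop :=
  (forall u v, adj u v -> T_adj (f u) (f v)) /\
  (forall v, T_hue (f v) = psi v) /\
  (forall v, T_color (f v) = phi v).

(* Main.v *)
Require Import Defs.
From Stdlib Require Import Relations.
From mathcomp Require Import all_boot all_order all_algebra.
Import GRing.Theory Num.Theory.
Local Open Scope ring_scope.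

Lemma hue_shift (a b x y : int) :
  T_hue (a + x, b + y) = T_hue (a, b) + (x + y)%:~R.
Proof. by rewrite /T_hue /= -intrD; congr (_ %:~R); rewrite !addrA; congr (_ + _); rewrite -!addrA; congr (_ + _); exact: addrC. Qed.

Lemma color_shift (a b x y : int) :
  T_color (a + x, b + y) = ((a%:~R + x%:~R), (b%:~R + y%:~R)).
Proof. by rewrite /T_color /= !intrD. Qed.

Definition dirs : seq (int * int) :=
  [:: (1,0); (-1,0); (0,1); (0,-1); (1,1); (-1,-1)].

Lemma adj_inv (v u : Tvert) : T_adj v u ->
  exists x y : int, u = (v.1 + x, v.2 + y) /\
   ((x, y) \in dirs).
Proof.
case: u => p q; rewrite /T_adj /=.
move=> H; exists (p - v.1), (q - v.2); split.
  by congr pair; rewrite addrC subrK.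
by case: H => [[-> ->]|[[-> ->]|[[-> ->]|[[-> ->]|[[-> ->]|[-> ->]]]]]].
Qed.

Lemma key : all (fun p : int * int => all (fun q : int * int => (p == q) ||
  ~~ [&& ((p.1 + p.2)%:~R == (q.1 + q.2)%:~R :> 'Z_3),
         (p.1%:~R == q.1%:~R :> 'Z_2) & (p.2%:~R == q.2%:~R :> 'Z_2)]) dirs) dirs.
Proof. by vm_compute. Qed.

Lemma part1 : forall v u1 u2 : Tvert, T_adj v u1 -> T_adj v u2 -> u1 <> u2 ->
     (T_hue u1, T_color u1) <> (T_hue u2, T_color u2).
Proof.
move=> [a b] u1 u2 /adj_inv [x1 [y1 [-> H1]]] /adj_inv [x2 [y2 [-> H2]]] /=.
rewrite !hue_shift !color_shift => Hne E.
have Hh : (x1 + y1)%:~R = (x2 + y2)%:~R :> 'Z_3.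
  by apply: (addrI (T_hue (a, b))); exact: (f_equal fst E).
have Hc1 : x1%:~R = x2%:~R :> 'Z_2.
  by apply: (addrI (a%:~R)); exact: (f_equal (fun p => p.2.1) E).
have Hc2 : y1%:~R = y2%:~R :> 'Z_2.
  by apply: (addrI (b%:~R)); exact: (f_equal (fun p => p.2.2) E).
clear E.
apply: Hne.
case/orP: (allP (allP key _ H1) _ H2) => [/eqP [-> ->] //|].
by rewrite Hh Hc1 Hc2 !eqxx.
Qed.

Theorem mainTheorem3 :
  (forall v u1 u2 : Tvert, T_adj v u1 -> T_adj v u2 -> u1 <> u2 ->
     (T_hue u1, T_color u1) <> (T_hue u2, T_color u2)) /\
  (forall (V : Type) (adj : V -> V -> Prop)
          (psi : V -> 'Z_3) (phi : V -> 'Z_2 * 'Z_2),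
     simple_graph adj -> proper_coloring adj psi -> proper_coloring adj phi ->
     connected adj ->
     forall (x : V) (f1 f2 : V -> Tvert),
       dappled_hom_to_T adj psi phi f1 -> dappled_hom_to_T adj psi phi f2 ->
       f1 x = f2 x -> forall v, f1 v = f2 v).
Proof.
split; first exact: part1.
move=> V adj psi phi _ _ _ Hc x f1 f2 [A1 [P1 C1]] [A2 [P2 C2]] Hx v.
have H := Hc x v; move/clos_rt_rt1n_iff: H => H.
move: Hx; elim: H => [//|u w z Huw _ IH] Hx.
apply: IH.
case: (eqVneq (f1 w) (f2 w)) => [//|Hne].
exfalso; have A2' : T_adj (f1 u) (f2 w) by rewrite Hx; exact: A2.
have Hne' : f1 w <> f2 w by move=> E; rewrite E eqxx in Hne.
have := @part1 _ _ _ (A1 _ _ Huw) A2' Hne'. by rewrite P1 P2 C1 C2.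
Qed.
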